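(* The category $\mathcal{Q}$ is equivalent to the category $\mathrm{SRings}_{\le 1}^{\mathrm{good}}$.
   Context: Rings are commutative and unital. A quasi-ideal in a ring $C$ is a pair $(I,d)$, where $I$ is a $C$-module and $d:I\to C$ is a $C$-linear map with $d(x)\cdot y=d(y)\cdot x$ for all $x,y\in I$. $\mathcal{Q}$ is the category of triples $(C,I,d)$ with $C$ a ring and $(I,d)$ a quasi-ideal in $C$. Morphisms are pairs (ring homomorphism, compatible semilinear map commuting with $d$). A 1-truncated simplicial ring is a collection $(A_0,A_1,\partial_0,\partial_1,s)$ of rings $A_0,A_1$ and ring homomorphisms $\partial_0,\partial_1:A_1\to A_0$, $s:A_0\to A_1$ with $\partial_0 s=\partial_1 s=\mathrm{id}$. $\mathrm{SRings}_{\le 1}^{\mathrm{good}}$ is the full subcategory of the category of 1-truncated simplicial rings formed by those with $(\ker\partial_0)\cdot(\ker\partial_1)=0$. *)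

(* Defs.v *)
From HB Require Import structures.
From mathcomp Require Import all_boot all_order all_algebra.
Set Implicit Arguments.
Set Warnings "-notation-overridden,-ambiguous-paths". Unset Strict Implicit. Unset Printing Implicit Defensive.
Import GRing.Theory.
Local Open Scope ring_scope.

(* Morphisms come with an equality relation [heq] (extensional equality of the
   underlying maps). *)
Record Cat := {
  Ob : Type;
  Hom : Ob -> Ob -> Type;
  heq : forall a b, Hom a b -> Hom a b -> Prop;
  cid : forall a, Hom a a;
  ccomp : forall a b c, Hom b c -> Hom a b -> Hom a c   (* ccomp g f = g o f *)
}.
Arguments Hom : clear implicits.
Arguments heq {c a b} : rename.
Arguments cid : clear implicits.
Arguments ccomp {c a b c0} : rename.

Record Functor (C D : Cat) := {
  fob : Ob C -> Ob D;
  fhom : forall a b, Hom C a b -> Hom D (fob a) (fob b);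
  fresp : forall a b (f g : Hom C a b), heq f g -> heq (fhom f) (fhom g);
  fid : forall a, heq (fhom (cid C a)) (cid D (fob a));
  fcomp : forall a b c (g : Hom C b c) (f : Hom C a b),
      heq (fhom (ccomp g f)) (ccomp (fhom g) (fhom f))
}.

Definition nat_iso (C D : Cat) (F0 G0 : Ob C -> Ob D)
  (F1 : forall a b, Hom C a b -> Hom D (F0 a) (F0 b))
  (G1 : forall a b, Hom C a b -> Hom D (G0 a) (G0 b)) : Prop :=
  exists (alpha : forall a, Hom D (F0 a) (G0 a))
         (beta : forall a, Hom D (G0 a) (F0 a)),
    (forall a, heq (ccomp (beta a) (alpha a)) (cid D (F0 a))) /\
    (forall a, heq (ccomp (alpha a) (beta a)) (cid D (G0 a))) /\
    (forall a b (f : Hom C a b),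
        heq (ccomp (G1 a b f) (alpha a)) (ccomp (alpha b) (F1 a b f))).

Definition cat_equiv (C D : Cat) : Prop :=
  exists (F : Functor C D) (G : Functor D C),
    @nat_iso C C (fun a => a) (fun a => fob G (fob F a))
            (fun a b f => f) (fun a b f => fhom G (fhom F f)) /\
    @nat_iso D D (fun a => fob F (fob G a)) (fun a => a)
            (fun a b f => fhom F (fhom G f)) (fun a b f => f).

Record QObj := {
  qC : comPzRingType;
  qI : lmodType qC;
  qd : qI -> qC;
  qd_linear : forall (c : qC) (x y : qI), qd (c *: x + y) = c * qd x + qd y;
  qd_sym : forall x y : qI, qd x *: y = qd y *: x
}.
Arguments qd : clear implicits.

Record QHom (X Y : QObj) := {
  qf : {rmorphism qC X -> qC Y};
  qg : qI X -> qI Y;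
  qg_add : forall x y, qg (x + y) = qg x + qg y;
  qg_semilin : forall (c : qC X) (x : qI X), qg (c *: x) = qf c *: qg x;
  qg_d : forall x, qd Y (qg x) = qf (qd X x)
}.

Definition QHom_eq X Y (h k : QHom X Y) : Prop :=
  (forall c, qf h c = qf k c) /\ (forall x, qg h x = qg k x).

Definition QHom_id (X : QObj) : QHom X X.
Proof.
refine (@Build_QHom X X idfun idfun _ _ _); by [].
Defined.

Definition QHom_comp X Y Z (h : QHom Y Z) (k : QHom X Y) : QHom X Z.
Proof.
refine (@Build_QHom X Z (qf h \o qf k) (qg h \o qg k) _ _ _) => /=.
- by move=> x y; rewrite qg_add qg_add.
- by move=> c x; rewrite qg_semilin qg_semilin.
- by move=> x; rewrite qg_d qg_d.
Defined.

Definition QCat : Cat :=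
  {| Ob := QObj; Hom := QHom; heq := QHom_eq; cid := QHom_id;
     ccomp := QHom_comp |}.

Record SObj := {
  sA0 : comPzRingType;
  sA1 : comPzRingType;
  sd0 : {rmorphism sA1 -> sA0};
  sd1 : {rmorphism sA1 -> sA0};
  ss : {rmorphism sA0 -> sA1};
  sd0s : forall a, sd0 (ss a) = a;
  sd1s : forall a, sd1 (ss a) = a;
  (* goodness: (ker d0) * (ker d1) = 0, i.e. the ideal product vanishes,
     equivalently x * y = 0 for all x in ker d0 and y in ker d1 *)
  sgood : forall x y : sA1, sd0 x = 0 -> sd1 y = 0 -> x * y = 0
}.

Record SHom (X Y : SObj) := {
  sh0 : {rmorphism sA0 X -> sA0 Y};
  sh1 : {rmorphism sA1 X -> sA1 Y};
  sh_d0 : forall x, sd0 Y (sh1 x) = sh0 (sd0 X x);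
  sh_d1 : forall x, sd1 Y (sh1 x) = sh0 (sd1 X x);
  sh_s : forall a, ss Y (sh0 a) = sh1 (ss X a)
}.

Definition SHom_eq X Y (h k : SHom X Y) : Prop :=
  (forall a, sh0 h a = sh0 k a) /\ (forall x, sh1 h x = sh1 k x).

Definition SHom_id (X : SObj) : SHom X X.
Proof.
refine (@Build_SHom X X idfun idfun _ _ _); by [].
Defined.

Definition SHom_comp X Y Z (h : SHom Y Z) (k : SHom X Y) : SHom X Z.
Proof.
refine (@Build_SHom X Z (sh0 h \o sh0 k) (sh1 h \o sh1 k) _ _ _) => /=.
- by move=> x; rewrite !sh_d0.
- by move=> x; rewrite !sh_d1.
- by move=> a; rewrite !sh_s.
Defined.

Definition SCat : Cat :=
  {| Ob := SObj; Hom := SHom; heq := SHom_eq; cid := SHom_id;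
     ccomp := SHom_comp |}.

(* Main.v *)
From HB Require Import structures.
Require Import Defs.
From mathcomp Require Import all_boot all_order all_algebra.
Set Implicit Arguments. Unset Strict Implicit. Unset Printing Implicit Defensive.
Import GRing.Theory.
Local Open Scope ring_scope.

Lemma qd0 X : qd X 0 = 0.
Proof.
have := qd_linear 1 (0 : qI X) 0; rewrite scale1r addr0 mul1r => /eqP.
by rewrite -subr_eq subrr eq_sym => /eqP.
Qed.
Lemma qdD X (x y : qI X) : qd X (x + y) = qd X x + qd X y.
Proof. by rewrite -[x]scale1r qd_linear mul1r scale1r. Qed.
Lemma qdZ X c (x : qI X) : qd X (c *: x) = c * qd X x.
Proof. by rewrite -[c *: x]addr0 qd_linear qd0 addr0. Qed.

Definition sqT (X : QObj) := (qC X * qI X)%type.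
HB.instance Definition _ (X : QObj) := GRing.Zmodule.copy (sqT X) (qC X * qI X)%type.

Definition sqmul X (u v : sqT X) : sqT X :=
  (u.1 * v.1, u.1 *: v.2 + v.1 *: u.2 + qd X u.2 *: v.2).
Definition sqone X : sqT X := (1, 0).

Lemma sqmulA X : associative (@sqmul X).
Proof.
move=> [a x] [b y] [c z]; rewrite /sqmul /=; congr (_, _); first by rewrite mulrA.
rewrite !qdD !qdZ !scalerDr !scalerDl !scalerA.
rewrite (mulrC c a) (mulrC c b) (mulrC c (qd X x)) (mulrC b (qd X x)) !addrA.
by rewrite [RHS](ACl (1*2*5*3*6*4*7)).
Qed.

Lemma sqmulC X : commutative (@sqmul X).
Proof.
move=> [a x] [b y]; rewrite /sqmul /=; congr (_, _); first by rewrite mulrC.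
by rewrite qd_sym (addrC (a *: y)).
Qed.

Lemma sqmul1 X : left_id (@sqone X) (@sqmul X).
Proof.
move=> [a x]; rewrite /sqmul /=; congr (_, _); first by rewrite mul1r.
by rewrite scale1r scaler0 qd0 scale0r !addr0.
Qed.

Lemma sqmulDl X : left_distributive (@sqmul X) +%R.
Proof.
move=> [a x] [b y] [c z]; rewrite /sqmul /=; congr (_, _); first by rewrite mulrDl.
rewrite qdD !scalerDl !scalerDr !addrA.
rewrite /= ?addrA.
by rewrite [LHS](ACl (1*3*5*2*4*6)).
Qed.

HB.instance Definition _ (X : QObj) :=
  GRing.Zmodule_isComPzRing.Build (sqT X) (@sqmulA X) (@sqmulC X) (@sqmul1 X) (@sqmulDl X).

Definition mkRM (R S : pzRingType) (f : R -> S) (hA : zmod_morphism f) (hM : monoid_morphism f) : {rmorphism R -> S} :=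
  HB.pack_for {rmorphism R -> S} f (GRing.isZmodMorphism.Build R S f hA) (GRing.isMonoidMorphism.Build R S f hM).

Lemma mkRME R S f hA hM x : @mkRM R S f hA hM x = f x.
Proof. by []. Qed.

Definition sqd0f X (u : sqT X) : qC X := u.1.
Definition sqd1f X (u : sqT X) : qC X := u.1 + qd X u.2.
Definition sqsf X (c : qC X) : sqT X := (c, 0).

Lemma sqd0_zm X : zmod_morphism (@sqd0f X). Proof. by move=> [a x] [b y]. Qed.
Lemma sqd0_mm X : monoid_morphism (@sqd0f X). Proof. by split=> // [[a x] [b y]]. Qed.
Lemma qdN X (x : qI X) : qd X (- x) = - qd X x.
Proof. by rewrite -scaleN1r qdZ mulN1r. Qed.
Lemma qdB X (x y : qI X) : qd X (x - y) = qd X x - qd X y.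
Proof. by rewrite qdD qdN. Qed.
Lemma sqd1_zm X : zmod_morphism (@sqd1f X).
Proof. move=> [a x] [b y]; rewrite /sqd1f /= qdB; rewrite opprD !addrA; congr (_ + _); rewrite addrAC. done. Qed.
Lemma sqd1_mm X : monoid_morphism (@sqd1f X).
Proof.
split; first by rewrite /sqd1f /= qd0 addr0.
move=> [a x] [b y]; rewrite /sqd1f /= !qdD !qdZ mulrDl !mulrDr !addrA.
by rewrite (mulrC (qd X x) b).
Qed.
Lemma sqs_zm X : zmod_morphism (@sqsf X).
Proof. by move=> a b; rewrite /sqsf; congr (_, _); rewrite /= subrr. Qed.
Lemma sqs_mm X : monoid_morphism (@sqsf X).
Proof.
split=> // a b; rewrite /sqsf /sqmul /=; congr (_, _).
by rewrite /= !scaler0 !addr0.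
Qed.

Definition FobQ (X : QObj) : SObj.
Proof.
refine (@Build_SObj (qC X) (sqT X) (mkRM (@sqd0_zm X) (@sqd0_mm X))
  (mkRM (@sqd1_zm X) (@sqd1_mm X)) (mkRM (@sqs_zm X) (@sqs_mm X)) _ _ _).
- by [].
- by move=> a; rewrite !mkRME /sqd1f /sqsf /= qd0 addr0.
- move=> [a x] [b y]; rewrite !mkRME /sqd0f /sqd1f /= => -> /eqP.
  rewrite addr_eq0 => /eqP ->.
  rewrite /sqmul /=; congr (_, _); first by rewrite mul0r.
  by rewrite scale0r add0r scaleNr qd_sym addNr.
Defined.

Definition kerT (X : SObj) := {x : sA1 X | sd0 X x == 0}.
HB.instance Definition _ (X : SObj) := Choice.copy (kerT X) {x : sA1 X | sd0 X x == 0}.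

Lemma ker0P X : sd0 X 0 == 0. Proof. by rewrite rmorph0. Qed.
Lemma kerDP X (u v : kerT X) : sd0 X (val u + val v) == 0.
Proof. by rewrite rmorphD (eqP (valP u)) (eqP (valP v)) addr0. Qed.
Lemma kerNP X (u : kerT X) : sd0 X (- val u) == 0.
Proof. by rewrite rmorphN (eqP (valP u)) oppr0. Qed.
Lemma kerZP X (c : sA0 X) (u : kerT X) : sd0 X (ss X c * val u) == 0.
Proof. by rewrite rmorphM (eqP (valP u)) mulr0. Qed.

Definition kzero X : kerT X := exist (fun z : sA1 X => sd0 X z == 0) 0 (ker0P X).
Definition kadd X (u v : kerT X) : kerT X := exist (fun z : sA1 X => sd0 X z == 0) _ (kerDP u v).
Definition kopp X (u : kerT X) : kerT X := exist (fun z : sA1 X => sd0 X z == 0) _ (kerNP u).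
Definition kscale X (c : sA0 X) (u : kerT X) : kerT X := exist (fun z : sA1 X => sd0 X z == 0) _ (kerZP c u).

Lemma kaddA X : associative (@kadd X).
Proof. by move=> u v w; apply: val_inj; rewrite /= addrA. Qed.
Lemma kaddC X : commutative (@kadd X).
Proof. by move=> u v; apply: val_inj; rewrite /= addrC. Qed.
Lemma kadd0 X : left_id (kzero X) (@kadd X).
Proof. by move=> u; apply: val_inj; rewrite /= add0r. Qed.
Lemma kaddN X : left_inverse (kzero X) (@kopp X) (@kadd X).
Proof. by move=> u; apply: val_inj; rewrite /= addNr. Qed.

HB.instance Definition _ (X : SObj) := GRing.isZmodule.Build (kerT X) (@kaddA X) (@kaddC X) (@kadd0 X) (@kaddN X).

Lemma kscaleA X a b (v : kerT X) : kscale a (kscale b v) = kscale (a * b) v.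
Proof. by apply: val_inj; rewrite /= rmorphM mulrA. Qed.
Lemma kscale1 X : left_id 1 (@kscale X).
Proof. by move=> v; apply: val_inj; rewrite /= rmorph1 mul1r. Qed.
Lemma kscaleDr X : right_distributive (@kscale X) +%R.
Proof. by move=> a u v; apply: val_inj; rewrite /= mulrDr. Qed.
Lemma kscaleDl X (v : kerT X) : {morph (@kscale X)^~ v : a b / a + b}.
Proof. by move=> a b; apply: val_inj; rewrite /= rmorphD mulrDl. Qed.

HB.instance Definition _ (X : SObj) := GRing.Zmodule_isLmodule.Build (sA0 X) (kerT X) (@kscaleA X) (@kscale1 X) (@kscaleDr X) (@kscaleDl X).

Definition kd X (u : kerT X) : sA0 X := sd1 X (val u).

Lemma kval_scale X c (u : kerT X) : val (c *: u) = ss X c * val u. Proof. by []. Qed.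
Lemma kval_add X (u v : kerT X) : val (u + v) = val u + val v. Proof. by []. Qed.

Lemma kd_linear X c (x y : kerT X) : kd (c *: x + y) = c * kd x + kd y.
Proof. by rewrite /kd kval_add kval_scale rmorphD rmorphM sd1s. Qed.

Lemma good_mul X (y x : sA1 X) : sd0 X x = 0 -> y * x = ss X (sd1 X y) * x.
Proof.
move=> hx; apply/eqP; rewrite -subr_eq0 -mulrBl mulrC; apply/eqP.
by apply: sgood => //; rewrite rmorphB sd1s subrr.
Qed.

Lemma kd_sym X (x y : kerT X) : kd x *: y = kd y *: x.
Proof.
apply: val_inj; rewrite !kval_scale /kd.
rewrite -(good_mul (val x) (eqP (valP y))) -(good_mul (val y) (eqP (valP x))).
exact: mulrC.
Qed.

Definition GobS (X : SObj) : QObj := @Build_QObj (sA0 X) (kerT X) (@kd X) (@kd_linear X) (@kd_sym X).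

Lemma qg0 X Y (h : QHom X Y) : qg h 0 = 0.
Proof. by apply: (addrI (qg h 0)); rewrite -qg_add !addr0. Qed.
Lemma qgN X Y (h : QHom X Y) x : qg h (- x) = - qg h x.
Proof. by apply: (addrI (qg h x)); rewrite -qg_add !subrr qg0. Qed.

Definition Fh1f X Y (h : QHom X Y) (u : sqT X) : sqT Y := (qf h u.1, qg h u.2).
Lemma Fh1_zm X Y (h : QHom X Y) : zmod_morphism (Fh1f h).
Proof. by move=> [a x] [b y]; rewrite /Fh1f /=; congr (_, _); rewrite ?rmorphB // qg_add qgN. Qed.
Lemma Fh1_mm X Y (h : QHom X Y) : monoid_morphism (Fh1f h).
Proof.
split; first by rewrite /Fh1f /= rmorph1 qg0.
move=> [a x] [b y]; rewrite /Fh1f /sqmul /=; congr (_, _); first by rewrite rmorphM.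
by rewrite !qg_add !qg_semilin qg_d.
Qed.

Definition Fhom X Y (h : QHom X Y) : SHom (FobQ X) (FobQ Y).
Proof.
refine (@Build_SHom (FobQ X) (FobQ Y) (qf h) (mkRM (Fh1_zm h) (Fh1_mm h)) _ _ _).
- by [].
- by move=> [a x]; rewrite /= /sqd1f /= qg_d rmorphD.
- by move=> a; rewrite /= /sqsf /Fh1f /= qg0.
Defined.

Definition Gh1f X Y (h : SHom X Y) (u : kerT X) : kerT Y.
Proof.
refine (exist (fun z : sA1 Y => sd0 Y z == 0) (sh1 h (val u)) _).
by rewrite sh_d0 (eqP (valP u)) rmorph0.
Defined.

Definition Ghom X Y (h : SHom X Y) : QHom (GobS X) (GobS Y).
Proof.
refine (@Build_QHom (GobS X) (GobS Y) (sh0 h) (Gh1f h) _ _ _).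
- by move=> u v; apply: val_inj; rewrite /= rmorphD.
- by move=> c u; apply: val_inj; rewrite /= rmorphM sh_s.
- by move=> u; rewrite /= /kd /= sh_d1.
Defined.

Definition alSf (a : SObj) (u : sqT (GobS a)) : sA1 a := ss a u.1 + val u.2.
Lemma alS_zm a : zmod_morphism (@alSf a).
Proof.
move=> [c k] [c' k']; rewrite /alSf /= rmorphB opprD !addrA; congr (_ + _).
by rewrite addrAC.
Qed.
Lemma alS_mm a : monoid_morphism (@alSf a).
Proof.
split; first by rewrite /alSf /= rmorph1 addr0.
move=> [c k] [c' k']; rewrite /alSf /sqmul /= /kd.
rewrite rmorphM mulrDl !mulrDr (good_mul (val k) (eqP (valP k'))) !addrA.
rewrite (mulrC (val k)).
by [].
Qed.

Lemma beS_P a (y : sA1 a) : sd0 a (y - ss a (sd0 a y)) == 0.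
Proof. by rewrite rmorphB sd0s subrr. Qed.
Definition beSf (a : SObj) (y : sA1 a) : sqT (GobS a) :=
  (sd0 a y, exist (fun z : sA1 a => sd0 a z == 0) _ (beS_P y)).
Lemma albeS a (y : sA1 a) : alSf (beSf y) = y.
Proof. by rewrite /alSf /= addrC subrK. Qed.
Lemma bealS a (u : sqT (GobS a)) : beSf (alSf u) = u.
Proof.
case: u => c k; rewrite /beSf /alSf /=.
have e : sd0 a (ss a c + val k) = c by rewrite rmorphD sd0s (eqP (valP k)) addr0.
congr (_, _); first exact: e.
by apply: val_inj; rewrite /= e addrC addKr.
Qed.
Lemma alS_inj a : injective (@alSf a).
Proof. by move=> u v e; rewrite -(bealS u) e bealS. Qed.
Lemma beS_zm a : zmod_morphism (@beSf a).
Proof.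
move=> x y; apply: alS_inj; by rewrite (alS_zm (beSf x)) !albeS.
Qed.
Lemma beS_mm a : monoid_morphism (@beSf a).
Proof.
split; first by apply: alS_inj; rewrite albeS (alS_mm a).1.
by move=> x y; apply: alS_inj; rewrite (alS_mm a).2 !albeS.
Qed.

Definition FQS : Functor QCat SCat.
Proof.
refine (@Build_Functor QCat SCat FobQ Fhom _ _ _).
- move=> X Y f g [e1 e2]; split=> //= [[c x]].
  by rewrite /Fh1f /= e1 e2.
- by move=> X; split=> [c|[c x]].
- by move=> X Y Z g f; split=> [c|[c x]].
Defined.

Definition GSQ : Functor SCat QCat.
Proof.
refine (@Build_Functor SCat QCat GobS Ghom _ _ _).
- move=> X Y f g [e1 e2]; split=> //= u.
  by apply: val_inj; rewrite /= e2.
- by move=> X; split=> //= u; apply: val_inj.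
- by move=> X Y Z g f; split=> //= u; apply: val_inj.
Defined.

Lemma alQ_P X (x : qI X) : sd0 (FobQ X) ((0, x) : sqT X) == 0.
Proof. by []. Qed.
Definition alQg X (x : qI X) : kerT (FobQ X) :=
  exist (fun z : sA1 (FobQ X) => sd0 (FobQ X) z == 0) ((0, x) : sqT X) (alQ_P x).

Definition alQ (X : QObj) : QHom X (GobS (FobQ X)).
Proof.
refine (@Build_QHom X (GobS (FobQ X)) idfun (@alQg X) _ _ _).
- by move=> x y; apply: val_inj; rewrite /= /alQg /=; congr (_, _); rewrite addr0.
- move=> c x; apply: val_inj; rewrite /= /alQg /= /sqmul /sqsf /=.
  by congr (_, _); rewrite ?mulr0 // scaler0 qd0 scale0r !addr0.
- by move=> x; rewrite /= /kd /= /sqd1f /= add0r.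
Defined.

Definition beQ (X : QObj) : QHom (GobS (FobQ X)) X.
Proof.
refine (@Build_QHom (GobS (FobQ X)) X idfun (fun k => (val k).2) _ _ _).
- by [].
- move=> c k; rewrite /= /sqmul /sqsf /=.
  by rewrite scaler0 qd0 scale0r !addr0.
- move=> k; rewrite /= /kd /= /sqd1f /=.
  have := valP k; rewrite /= /sqd0f => /eqP ->.
  by rewrite add0r.
Defined.

Definition alS (a : SObj) : SHom (FobQ (GobS a)) a.
Proof.
refine (@Build_SHom (FobQ (GobS a)) a idfun (mkRM (@alS_zm a) (@alS_mm a)) _ _ _).
- by move=> [c k]; rewrite /= /alSf /sqd0f /= rmorphD sd0s (eqP (valP k)) addr0.
- by move=> [c k]; rewrite /= /alSf /sqd1f /= rmorphD sd1s.
- by move=> c; rewrite /= /alSf /sqsf /= addr0.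
Defined.

Definition beS (a : SObj) : SHom a (FobQ (GobS a)).
Proof.
refine (@Build_SHom a (FobQ (GobS a)) idfun (mkRM (@beS_zm a) (@beS_mm a)) _ _ _).
- by [].
- move=> y; rewrite /= /beSf /sqd1f /= /kd /= rmorphB sd1s.
  by rewrite addrC subrK.
- by move=> c; apply: alS_inj; rewrite /= albeS /alSf /sqsf /= addr0.
Defined.

Theorem lemma3p3p6 : cat_equiv QCat SCat.
Proof.
exists FQS, GSQ; split.
- exists alQ, beQ; split; [|split].
  + by move=> X; split.
  + move=> X; split=> //= k; apply: val_inj; rewrite /= /alQg /=.
    case: k => [[c x] /= /eqP hc]; rewrite /=.
    by congr (_, _); rewrite hc.
  + move=> X Y f; split=> //= x; apply: val_inj; rewrite /= /alQg /= /Fh1f /=.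
    by rewrite rmorph0.
- exists alS, beS; split; [|split].
  + by move=> a; split=> //= u; rewrite bealS.
  + by move=> a; split=> //= y; rewrite albeS.
  + move=> a b f; split=> //= [[c k]].
    by rewrite /alSf /Fh1f /= rmorphD sh_s.
Qed.
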